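(* Let $K$ be a field of characteristic $0$ and let $f\in K[x_1,\ldots,x_n]$ be a homogeneous polynomial of degree $d$. The following two properties are equivalent: (i) $f$ is a monomial (times a nonzero constant) which depends on all of its $n$ variables; (ii) the Lie algebra $\mathfrak{g}_f$ is an $(n-1)$-dimensional subspace of the space of diagonal $n\times n$ matrices.
   Context: For $P\in K[x_1,\ldots,x_n]$, the Lie algebra $\mathfrak{g}_P$ of $P$ is the Lie algebra (tangent space at the identity) of the group of invariants $\{A\in GL_n(K): P(A.x)=P(x)\}$; equivalently, $\mathfrak{g}_P$ is the linear subspace of matrices $A=(a_{ij})\in M_n(K)$ such that $\sum_{i,j\in[n]} a_{ij}\,x_j\,\frac{\partial P}{\partial x_i}=0$. *)

(* Defs.v *)
From HB Require Import structures.
From mathcomp Require Import all_boot all_order all_algebra.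
From mathcomp Require Import mpoly.
Set Implicit Arguments. Unset Strict Implicit. Unset Printing Implicit Defensive.
Import GRing.Theory.
Local Open Scope ring_scope.

Definition in_lie_alg (K : fieldType) (n : nat) (P : {mpoly K[n]}) (A : 'M[K]_n) : Prop :=
  \sum_(i < n) \sum_(j < n) A i j *: ('X_j * mderiv i P) = 0.

Definition full_monomial (K : fieldType) (n : nat) (P : {mpoly K[n]}) : Prop :=
  exists (c : K) (m : 'X_{1..n}), c != 0 /\ (forall i : 'I_n, (0 < m i)%N) /\ P = c *: 'X_[m].

Definition lie_alg_diag_codim1 (K : fieldType) (n : nat) (P : {mpoly K[n]}) : Prop :=
  exists V : {vspace 'M[K]_n},
    (forall A : 'M[K]_n, A \in V <-> in_lie_alg P A) /\
    \dim V = n.-1 /\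
    (forall A : 'M[K]_n, A \in V -> is_diag_mx A).

(* Main.v *)
Require Import Defs.
From HB Require Import structures.
From mathcomp Require Import all_boot all_order all_algebra.
From mathcomp Require Import mpoly.
From mathcomp Require Import ring zify.
Local Open Scope ring_scope.

Module Aux.
Set Implicit Arguments. Unset Strict Implicit. Unset Printing Implicit Defensive.
Import GRing.Theory.

Section S.
Variables (K : fieldType) (n : nat).
Implicit Types (f : {mpoly K[n]}) (A B : 'M[K]_n).

Definition LL f A : {mpoly K[n]} :=
  \sum_(i < n) \sum_(j < n) A i j *: ('X_j * mderiv i f).

Lemma coef_sum_supp f (w : 'X_{1..n} -> K) b :
  \sum_(m <- msupp f) (f@_m * w m) * (m == b)%:R = f@_b * w b.
Proof.
rewrite [in RHS](mpolyE f) raddf_sum /= mulr_suml; apply: eq_bigr => m _.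
rewrite mcoeffZ mcoeffX; case: eqP => [->|_]; by rewrite ?mulr1 ?mulr0 ?mul0r.
Qed.

Lemma XderivE i f :
  'X_i * mderiv i f = \sum_(m <- msupp f) (f@_m * (m i)%:R) *: 'X_[m].
Proof.
rewrite {1}(mpolyE f) raddf_sum mulr_sumr; apply: eq_bigr => m _.
rewrite /= mderivZ mderivX -!scalerAr -mpolyXD scalerA.
have [->|mi] := eqVneq (m i) 0%N; first by rewrite !mulr0 !scale0r.
by rewrite addmC submK // lep1mP.
Qed.

Lemma coefXderiv i f b : ('X_i * mderiv i f)@_b = f@_b * (b i)%:R.
Proof.
rewrite XderivE raddf_sum /=.
under eq_bigr do rewrite mcoeffZ mcoeffX.
by have := coef_sum_supp f (fun m => (m i)%:R) b.
Qed.

Lemma LL_diag f A : is_diag_mx A -> LL f A = \sum_i A i i *: ('X_i * mderiv i f).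
Proof.
move/is_diag_mxP=> dA; apply: eq_bigr => i _.
rewrite (bigD1 i) //= big1 ?addr0 // => j ji.
by rewrite dA ?scale0r // eq_sym.
Qed.

Definition dsum (w : 'X_{1..n}) A : K := \sum_i A i i * (w i)%:R.

Lemma coef_LL_diag f A b : is_diag_mx A -> (LL f A)@_b = dsum b A * f@_b.
Proof.
move=> dA; rewrite LL_diag // raddf_sum /= /dsum mulr_suml; apply: eq_bigr => i _.
by rewrite mcoeffZ coefXderiv; ring.
Qed.

Lemma dsumD w A B : dsum w (A + B) = dsum w A + dsum w B.
Proof. by rewrite /dsum -big_split; apply: eq_bigr => i _; rewrite mxE mulrDl. Qed.

Lemma dsumZ w a A : dsum w (a *: A) = a * dsum w A.
Proof. by rewrite /dsum mulr_sumr; apply: eq_bigr => i _; rewrite mxE mulrA. Qed.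

Lemma dsum_delta w k : dsum w (delta_mx k k) = (w k)%:R.
Proof.
rewrite /dsum (bigD1 k) //= big1 ?addr0 => [|i ik]; rewrite mxE ?eqxx ?mul1r //.
by rewrite (negbTE ik) mul0r.
Qed.

Lemma mderiv_zero k f : (forall m, m \in msupp f -> m k = 0%N) -> mderiv k f = 0.
Proof.
move=> h; rewrite {1}(mpolyE f) raddf_sum /= big_seq big1 // => m hm.
by rewrite mderivZ mderivX h // scale0r scaler0.
Qed.

Lemma LL_row0 k f A : mderiv k f = 0 -> (forall i j, i != k -> A i j = 0) -> LL f A = 0.
Proof.
move=> hk hA; apply: big1 => i _; apply: big1 => j _.
by have [->|ne] := eqVneq i k; [rewrite hk mulr0 scaler0 | rewrite hA // scale0r].
Qed.

Lemma diag_delta k : is_diag_mx (delta_mx k k : 'M[K]_n).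
Proof.
apply/is_diag_mxP => i j ij; rewrite mxE.
by case: eqP => [ik|] //; case: eqP => [jk|] //; case/eqP: ij; rewrite ik jk.
Qed.

Lemma diagD A B : is_diag_mx A -> is_diag_mx B -> is_diag_mx (A + B).
Proof. by move=> /is_diag_mxP hA /is_diag_mxP hB; apply/is_diag_mxP => i j ij; rewrite mxE hA ?hB ?addr0. Qed.

Lemma diagZ a A : is_diag_mx A -> is_diag_mx (a *: A).
Proof. by move=> /is_diag_mxP hA; apply/is_diag_mxP => i j ij; rewrite mxE hA ?mulr0. Qed.

Definition DX := [tuple (delta_mx i i : 'M[K]_n) | i < n].
Definition D0 : {vspace 'M[K]_n} := <<DX>>%VS.

Lemma delta_in_D0 k : delta_mx k k \in D0.
Proof. by apply/memv_span/tnthP; exists k; rewrite tnth_mktuple. Qed.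

Lemma dimD0 : \dim D0 = n.
Proof.
have: free DX.
  apply/freeP => c h i.
  have := congr1 (fun M : 'M[K]_n => M i i) h; rewrite summxE mxE => <-.
  rewrite (bigD1 i) //= big1 ?addr0.
    by rewrite (nth_map i) ?size_enum_ord // nth_ord_enum !mxE eqxx mulr1.
  by move=> j ji; rewrite (nth_map i) ?size_enum_ord // nth_ord_enum !mxE eq_sym (negbTE ji) mulr0.
by rewrite /free size_tuple => /eqP.
Qed.

Lemma diag_in_D0 A : is_diag_mx A -> A \in D0.
Proof.
move=> /is_diag_mxP dA.
have -> : A = \sum_i A i i *: delta_mx i i.
  apply/matrixP => a b; rewrite summxE.
  have [ab|ab] := eqVneq a b.
    rewrite -ab (bigD1 a) //= big1 ?addr0 => [|i ia]; rewrite !mxE ?eqxx ?mulr1 //.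
    by rewrite eq_sym (negbTE ia) mulr0.
  rewrite dA ?big1 // => i _; rewrite !mxE.
  by case: eqP => [ai|]; case: eqP => [bi|] //=; rewrite ?mulr0 //; case/eqP: ab; rewrite ai bi.
by apply: rpred_sum => i _; apply: rpredZ; apply: delta_in_D0.
Qed.

Lemma dim_lt (U W : {vspace 'M[K]_n}) w :
  (U <= W)%VS -> w \in W -> w \notin U -> (\dim U < \dim W)%N.
Proof.
move=> UW wW wU; rewrite ltnNge; apply/negP => h.
have /eqP E : U == W by rewrite eqEdim UW h.
by rewrite E wW in wU.
Qed.


Lemma collide (m : 'X_{1..n}) (i j a b : 'I_n) :
  (forall t, 0 < m t)%N -> a != b ->
  (U_(j) + (m - U_(i)) == U_(b) + (m - U_(a)))%MM = (i == a) && (j == b).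
Proof.
move=> mpos ab; apply/eqP/andP => [/mnmP h|[/eqP -> /eqP ->] //].
have hb := h b; have ha := h a.
rewrite !mnmDE !mnmBE !mnm1E eqxx in hb.
rewrite !mnmDE !mnmBE !mnm1E eqxx in ha.
rewrite [(a == b)](negbTE ab) in hb ha.
have ba : (b == a) = false by rewrite eq_sym (negbTE ab).
rewrite ba in hb ha.
have mb := mpos b; have ma := mpos a.
have [jb|jb] := eqVneq j b; last first.
  by move: hb; rewrite (negbTE jb); case: (i == b) => /=; lia.
rewrite jb ba in ha.
have [ib|ib] := eqVneq i b.
  by move: hb; rewrite ib eqxx /=; lia.
split => //.
by move: ha; case: (i == a) => //=; lia.
Qed.

Lemma sum2_collapse (F : 'I_n -> 'I_n -> K) a b :
  \sum_i \sum_j F i j * ((i == a) && (j == b))%:R = F a b.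
Proof.
rewrite (bigD1 a) //= [X in _ + X]big1 ?addr0 => [|i ia]; last first.
  by apply: big1 => j _; rewrite (negbTE ia) mulr0.
rewrite (bigD1 b) //= [X in _ + X]big1 ?addr0 => [|j jb]; first by rewrite !eqxx mulr1.
by rewrite eqxx (negbTE jb) mulr0.
Qed.

Lemma LL_mono c (m : 'X_{1..n}) A :
  LL (c *: 'X_[m]) A =
  \sum_i \sum_j (A i j * c * (m i)%:R) *: 'X_[(U_(j) + (m - U_(i)))%MM].
Proof.
apply: eq_bigr => i _; apply: eq_bigr => j _.
by rewrite mderivZ mderivX -!scalerAr -mpolyXD !scalerA mulrA.
Qed.

Lemma coef_LL_mono c (m : 'X_{1..n}) A nu :
  (LL (c *: 'X_[m]) A)@_nu =
  \sum_i \sum_j (A i j * c * (m i)%:R) * ((U_(j) + (m - U_(i)))%MM == nu)%:R.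
Proof.
rewrite LL_mono raddf_sum /=; apply: eq_bigr => i _.
by rewrite raddf_sum /=; apply: eq_bigr => j _; rewrite mcoeffZ mcoeffX.
Qed.

Hypothesis char0 : [pchar K] =i pred0.

Lemma natK_eq0 k : ((k%:R : K) == 0) = (k == 0)%N.
Proof. by move/pcharf0P: char0 => ->. Qed.

Lemma natK_inj a b : (a%:R : K) = b%:R -> a = b.
Proof.
wlog ab : a b / (a <= b)%N.
  by move=> W h; case: (leqP a b) => [ab|/ltnW ba]; [exact: W | symmetry; exact: W].
move=> h; have: ((b - a)%:R : K) == 0 by rewrite natrB // h subrr.
by rewrite natK_eq0; lia.
Qed.

Lemma mono_char c (m : 'X_{1..n}) A :
  c != 0 -> (forall t, 0 < m t)%N ->
  (LL (c *: 'X_[m]) A = 0 <->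
   (forall i j, i != j -> A i j = 0) /\ dsum m A = 0).
Proof.
move=> c0 mpos; split => [h|[hA hs]].
  have offd : forall i j, i != j -> A i j = 0.
    move=> a b ab.
    have := congr1 (mcoeff (U_(b) + (m - U_(a)))%MM) h.
    rewrite coef_LL_mono mcoeff0.
    under eq_bigr do under eq_bigr do rewrite collide //.
    rewrite sum2_collapse => /eqP.
    rewrite !mulf_eq0 natK_eq0 (negbTE c0) orbF.
    by case/orP => [/eqP //|]; have := mpos a; lia.
  split => //.
  have dA : is_diag_mx A by apply/is_diag_mxP => i j ij; apply: offd.
  have := congr1 (mcoeff m) h.
  rewrite coef_LL_diag // mcoeff0 mcoeffZ mcoeffX eqxx mulr1 => /eqP.
  by rewrite mulf_eq0 (negbTE c0) orbF => /eqP.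
have dA : is_diag_mx A by apply/is_diag_mxP => i j ij; apply: hA.
apply/mpolyP => nu; rewrite coef_LL_diag // mcoeff0.
have [<-|ne] := eqVneq m nu; first by rewrite hs mul0r.
by rewrite mcoeffZ mcoeffX (negbTE ne) mulr0 mulr0.
Qed.


Lemma prop_eq (a b : 'X_{1..n}) : mdeg a = mdeg b ->
  (forall k l, a l * b k = a k * b l)%N -> a = b.
Proof.
move=> hd h; apply/mnmP => l.
have e : (a l * mdeg b = mdeg a * b l)%N.
  rewrite !mdegE big_distrr big_distrl /=; apply: eq_bigr => k _; exact: h.
rewrite -hd in e.
have al : (a l <= mdeg a)%N by rewrite mdegE (bigD1 l) //= leq_addr.
have bl : (b l <= mdeg b)%N by rewrite mdegE (bigD1 l) //= leq_addr.
have [d0|dpos] := eqVneq (mdeg a) 0%N.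
  rewrite -hd d0 in bl; rewrite d0 in al; lia.
rewrite mulnC in e.
by move/eqP: e; rewrite eqn_pmul2l ?lt0n // => /eqP.
Qed.

End S.
End Aux.
Import Aux.
Import GRing.Theory.

Theorem proposition5 (K : fieldType) (n d : nat) (f : {mpoly K[n]}) :
  [pchar K] =i pred0 -> (0 < n)%N -> f \is d.-homog ->
  (full_monomial f <-> lie_alg_diag_codim1 f).
Proof.
case: n f => [//|n'] f hc _ hf.
have inL : forall (g : {mpoly K[n'.+1]}) A, in_lie_alg g A <-> LL g A = 0 by [].
split.
- case=> [c [m [c0 [mpos ->]]]].
  pose hfun (A : 'M[K]_n'.+1) : 'M[K]_n'.+1 :=
    \matrix_(i, j) (if i == j then (if i == ord0 then dsum m A else 0) else A i j).
  have hlin : linear hfun.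
    move=> t A B; apply/matrixP => i j; rewrite !mxE dsumD dsumZ.
    by case: (i == j); case: (i == ord0); rewrite ?mulr0 ?addr0.
  pose hL : {linear _ -> _} := HB.pack hfun (GRing.isLinear.Build _ _ _ _ hfun hlin).
  pose V := lker (linfun hL).
  have memV : forall A, A \in V <-> (forall i j, i != j -> A i j = 0) /\ dsum m A = 0.
    move=> A; rewrite memv_ker lfunE /=; split.
      move/eqP => h; split.
        move=> i j ij; have := congr1 (fun M : 'M[K]_n'.+1 => M i j) h.
        by rewrite !mxE (negbTE ij).
      by have := congr1 (fun M : 'M[K]_n'.+1 => M ord0 ord0) h; rewrite !mxE eqxx.
    case=> hA hs; apply/eqP/matrixP => i j; rewrite !mxE.
    have [_|ij] := eqVneq i j; last by rewrite hA.
    by case: (i == ord0); rewrite ?hs.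
  have mono := @mono_char K _ hc c m _ c0 mpos.
  exists V; split; [|split].
  + by move=> A; have := memV A; have := mono A; have := inL _ A; tauto.
  + have VD : (V <= D0 K n'.+1)%VS.
      apply/subvP => A /memV [hA _]; apply: diag_in_D0; apply/is_diag_mxP => i j ij.
      exact: hA.
    pose E := delta_mx ord0 ord0 : 'M[K]_n'.+1.
    have EV : E \notin V.
      apply/negP => /memV [_]; rewrite dsum_delta => /eqP; rewrite natK_eq0 //.
      by have := mpos ord0; lia.
    have lt1 := dim_lt VD (delta_in_D0 _ ord0) EV.
    rewrite dimD0 in lt1.
    have DVE : (D0 K n'.+1 <= V + <[E]>)%VS.
      apply/span_subvP => x /tnthP [k ->]; rewrite tnth_mktuple.
      pose t : K := (m k)%:R / (m ord0)%:R.
      have -> : delta_mx k k = (delta_mx k k + (- t) *: E) + t *: E.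
        by rewrite scaleNr subrK.
      apply: memv_add; last exact/memvZ/memv_line.
      apply/memV; split.
        move=> i j ij; move: (diagD (diag_delta K k) (diagZ (-t) (diag_delta K (@ord0 n')))).
        by move/is_diag_mxP; apply.
      rewrite dsumD dsumZ !dsum_delta mulNr divfK ?subrr // natK_eq0 //.
      by have := mpos ord0; lia.
    have := dimvS DVE; rewrite dimD0 => le1.
    have := dimv_add_leqif V <[E]>; case => le2 _.
    have le3 : (\dim <[E]> <= 1)%N by rewrite dim_vline; case: (E != 0).
    move: lt1 le1 le2 le3; move: (\dim V) (\dim (V + <[E]>)) (\dim <[E]>) => x y z; lia.
  + by move=> A /memV [hA _]; apply/is_diag_mxP => i j ij; apply: hA.
- case=> V [hV [hdim hdiag]].
  simpl in hdim.
  have VD : (V <= D0 K n'.+1)%VS by apply/subvP => A /hdiag; apply: diag_in_D0.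
  have step1 : forall k, exists2 a, a \in msupp f & (0 < a k)%N.
    move=> k; apply/hasP; apply/negPn/negP => /hasPn hn.
    have dk : mderiv k f = 0.
      by apply: mderiv_zero => a /hn; rewrite lt0n negbK => /eqP.
    have inV : forall j, delta_mx k j \in V.
      move=> j; apply/hV; apply/inL; apply: (LL_row0 dk) => i j' ik.
      by rewrite mxE (negbTE ik).
    have [n0|n0] := eqVneq n' 0%N.
      have h1 : (<[delta_mx k k]> <= V)%VS by rewrite -memvE inV.
      have hle := dimvS h1; rewrite dim_vline hdim in hle.
      have dnz : delta_mx k k != 0 :> 'M[K]_n'.+1.
        apply/eqP => h0; have := congr1 (fun M : 'M[K]_n'.+1 => M k k) h0.
        by rewrite !mxE eqxx /= => /eqP; rewrite oner_eq0.
      by rewrite dnz n0 in hle.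
    have [j jk] : exists j : 'I_n'.+1, k != j.
      case: (eqVneq k ord0) => [->|kn0]; last by exists ord0.
      exists ord_max; apply/negP => /eqP/(congr1 val) /= h.
      by move: n0; rewrite -h.
    have := hdiag _ (inV j); move/is_diag_mxP => /(_ k j jk).
    by rewrite mxE !eqxx /= => /eqP; rewrite oner_eq0.
  have [al als al0] := step1 ord0.
  have fal : f@_al != 0 by rewrite -mcoeff_msupp.
  have step3 : forall b, b \in msupp f -> b = al.
    move=> b bs; have [//|ne] := eqVneq b al; exfalso.
    move/dhomogP: hf => hd.
    have fb : f@_b != 0 by rewrite -mcoeff_msupp.
    have [k [l kl]] : exists k l, (al l * b k != al k * b l)%N.
      case: (boolP [forall k, [forall l, al l * b k == al k * b l]]) => [/forallP H|].
        case/eqP: ne; symmetry; apply: prop_eq; first by rewrite !hd.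
        by move=> k l; exact/eqP/(forallP (H k) l).
      rewrite negb_forall => /existsP [k]; rewrite negb_forall => /existsP [l kl].
      by exists k, l.
    pose A1 := (al l)%:R *: delta_mx k k + (- (al k)%:R) *: delta_mx l l : 'M[K]_n'.+1.
    have dA1 : is_diag_mx A1 := diagD (diagZ _ (diag_delta _ k)) (diagZ _ (diag_delta _ l)).
    have dsA1 w : dsum w A1 = (al l)%:R * (w k)%:R - (al k)%:R * (w l)%:R.
      by rewrite dsumD !dsumZ !dsum_delta mulNr.
    have A1V : A1 \notin V.
      apply/negP => /hV /inL h.
      have := congr1 (mcoeff b) h; rewrite coef_LL_diag // mcoeff0 dsA1 => /eqP.
      rewrite mulf_eq0 (negbTE fb) orbF subr_eq0 -!natrM => /eqP /(natK_inj hc) e.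
      by rewrite e eqxx in kl.
    have psiV v : v \in V -> dsum al v = 0.
      move=> vV; have h : LL f v = 0 := proj1 (inL _ _) ((hV v).1 vV).
      have := congr1 (mcoeff al) h; rewrite coef_LL_diag ?hdiag // mcoeff0 => /eqP.
      by rewrite mulf_eq0 (negbTE fal) orbF => /eqP.
    pose A2 := delta_mx ord0 ord0 : 'M[K]_n'.+1.
    have A2V : A2 \notin (V + <[A1]>)%VS.
      apply/negP => /memv_addP [v vV [w /vlineP [t ->] e]].
      have := congr1 (dsum al) e; rewrite dsumD dsumZ (psiV _ vV) dsA1 dsum_delta add0r.
      rewrite [X in _ - X]mulrC subrr mulr0 => /eqP; rewrite natK_eq0 //.
      by have := al0; lia.
    have h1 := dim_lt (addvSl V <[A1]>) (subvP (addvSr V <[A1]>) _ (memv_line A1)) A1V.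
    have h2 := dim_lt (addvSl (V + <[A1]>) <[A2]>)
                 (subvP (addvSr (V + <[A1]>) <[A2]>) _ (memv_line A2)) A2V.
    have h3 : (V + <[A1]> + <[A2]> <= D0 K n'.+1)%VS.
      rewrite !subv_add VD -!memvE delta_in_D0 andbT /=.
      by apply: memvD; apply: memvZ; apply: delta_in_D0.
    have := dimvS h3; rewrite dimD0; lia.
  exists f@_al, al; split => //; split.
    by move=> i; have [g gs gi] := step1 i; rewrite -(step3 g gs).
  apply/mpolyP => g; rewrite mcoeffZ mcoeffX; have [<-|ne] := eqVneq al g.
    by rewrite mulr1.
  rewrite mulr0; apply/eqP; rewrite mcoeff_eq0; apply/negP => gs.
  by rewrite (step3 _ gs) eqxx in ne.
Qed.
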